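(* Let $b\ge 0$ and consider the polynomial system (the case $a=c=0$) $$\dot x=x(1-y),\qquad \dot y=y(-1+x),\qquad \dot z=-bz.$$ (i) If $b=0$, the system is Darboux integrable with the first integrals $H_1=xy\exp(-x-y)$ and $H_2=z$. (ii) If $b>0$, the system is integrable with the first integrals $H_1=xy\exp(-x-y)$ and $H_2=z\,h(x,y)$, where $$h(x,y)=\exp\left(\int^{x}\frac{b}{s\left(W\!\left(-\frac{xy\,e^{s-x-y}}{s}\right)+1\right)}\,ds\right),$$ and $W$ denotes the principal branch of the Lambert $W$ function.
   Context: A first integral of a vector field $\mathcal{X}$ on an open set $U$ is a non-constant function $H$ with $\mathcal{X}H=0$ on $U$. Darboux integrable means having first integrals of Darboux type, i.e. of the form $f_1^{\lambda_1}\cdots f_p^{\lambda_p}E_1^{\mu_1}\cdots E_q^{\mu_q}$ with $f_i$ Darboux polynomials, $E_j$ exponential factors and $\lambda_i,\mu_j\in\mathbb{C}$. *)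

(* Defs.v *)
From Stdlib Require Import Reals ClassicalEpsilon.
From Coquelicot Require Import Coquelicot.
Open Scope R_scope.

Definition pt3 := ((R * R) * R)%type.

Definition pdx (H : R -> R -> R -> R) x y z := Derive (fun t => H t y z) x.
Definition pdy (H : R -> R -> R -> R) x y z := Derive (fun t => H x t z) y.
Definition pdz (H : R -> R -> R -> R) x y z := Derive (fun t => H x y t) z.

Definition C1_on (U : pt3 -> Prop) (H : R -> R -> R -> R) : Prop :=
  forall x y z, U (x, y, z) ->
    ex_derive (fun t => H t y z) x /\ ex_derive (fun t => H x t z) y /\
    ex_derive (fun t => H x y t) z /\
    continuous (fun q : pt3 => pdx H (fst (fst q)) (snd (fst q)) (snd q)) (x, y, z) /\
    continuous (fun q : pt3 => pdy H (fst (fst q)) (snd (fst q)) (snd q)) (x, y, z) /\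
    continuous (fun q : pt3 => pdz H (fst (fst q)) (snd (fst q)) (snd q)) (x, y, z).

Definition lie (P Q S H : R -> R -> R -> R) x y z : R :=
  P x y z * pdx H x y z + Q x y z * pdy H x y z + S x y z * pdz H x y z.

Definition first_integral_on (U : pt3 -> Prop) (P Q S H : R -> R -> R -> R) : Prop :=
  open U /\ C1_on U H /\
  (exists p q : pt3, U p /\ U q /\
     H (fst (fst p)) (snd (fst p)) (snd p) <> H (fst (fst q)) (snd (fst q)) (snd q)) /\
  (forall x y z, U (x, y, z) -> lie P Q S H x y z = 0).

Fixpoint sumR (n : nat) (F : nat -> R) : R :=
  match n with O => 0 | S n => sumR n F + F n end.
Fixpoint prodR (n : nat) (F : nat -> R) : R :=
  match n with O => 1 | S n => prodR n F * F n end.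

Definition poly3_deg_le (d : nat) (f : R -> R -> R -> R) : Prop :=
  exists (n : nat) (c : nat -> nat -> nat -> R),
    (forall i j k, (d < i + j + k)%nat -> c i j k = 0) /\
    forall x y z, f x y z =
      sumR n (fun i => sumR n (fun j => sumR n (fun k =>
        c i j k * x ^ i * y ^ j * z ^ k))).

Definition poly3 (f : R -> R -> R -> R) : Prop := exists d, poly3_deg_le d f.

Definition nonconstant3 (f : R -> R -> R -> R) : Prop :=
  exists x y z x' y' z', f x y z <> f x' y' z'.

Definition coprime3 (g h : R -> R -> R -> R) : Prop :=
  forall d, poly3 d ->
    (exists q, poly3 q /\ forall x y z, g x y z = d x y z * q x y z) ->
    (exists q, poly3 q /\ forall x y z, h x y z = d x y z * q x y z) ->
    ~ nonconstant3 d.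

Definition darboux_poly (m : nat) (P Q S f : R -> R -> R -> R) : Prop :=
  poly3 f /\ nonconstant3 f /\
  exists K, poly3_deg_le (m - 1) K /\
    forall x y z, lie P Q S f x y z = K x y z * f x y z.

Definition exp_factor (m : nat) (P Q S g h : R -> R -> R -> R) : Prop :=
  poly3 g /\ poly3 h /\ coprime3 g h /\
  exists L, poly3_deg_le (m - 1) L /\
    forall x y z, h x y z <> 0 ->
      lie P Q S (fun x y z => exp (g x y z / h x y z)) x y z
        = L x y z * exp (g x y z / h x y z).

(** H is of Darboux type on U: H = f_1^l_1 ... f_p^l_p E_1^mu_1 ... E_q^mu_q,
    E_j = exp(g_j/h_j). (Exponents l_i restricted to naturals.) *)
Definition darboux_type_on (m : nat) (U : pt3 -> Prop) (P Q S H : R -> R -> R -> R) : Prop :=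
  exists (p q : nat) (f : nat -> R -> R -> R -> R) (lam : nat -> nat)
         (g h : nat -> R -> R -> R -> R) (mu : nat -> R),
    (forall i, (i < p)%nat -> darboux_poly m P Q S (f i)) /\
    (forall j, (j < q)%nat -> exp_factor m P Q S (g j) (h j)) /\
    forall x y z, U (x, y, z) ->
      (forall j, (j < q)%nat -> h j x y z <> 0) /\
      H x y z = prodR p (fun i => f i x y z ^ lam i) *
                prodR q (fun j => exp (mu j * (g j x y z / h j x y z))).

(** Principal branch of the Lambert W function: for z >= -1/e, the unique
    w >= -1 with w e^w = z (unspecified value outside the domain). *)
Definition LambertW (z : R) : R :=
  epsilon (inhabits 0) (fun w => -1 <= w /\ w * exp w = z).

Definition Px (x y z : R) : R := x * (1 - y).
Definition Qy (x y z : R) : R := y * (-1 + x).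
Definition Sz (b : R) (x y z : R) : R := - b * z.

Definition H1 (x y z : R) : R := x * y * exp (- x - y).

(** h(x,y) = exp( int_{x0}^x b / (s (W(-xy e^{s-x-y}/s) + 1)) ds ),
    with base point x0 of the indefinite integral. *)
Definition hfun (b x0 x y : R) : R :=
  exp (RInt (fun s => b / (s * (LambertW (- (x * y * exp (s - x - y) / s)) + 1))) x0 x).

(* Main.v *)
Require Import Defs.
From Stdlib Require Import Reals Lra Lia ClassicalEpsilon Ranalysis5.
From Coquelicot Require Import Coquelicot.
Open Scope R_scope.

Module Alg.
From mathcomp Require Import all_boot all_algebra.
From mathcomp Require Import Rstruct.
Import GRing.Theory Num.Theory.
Local Open Scope ring_scope.

Lemma sumR_big n (F : nat -> R) : sumR n F = \sum_(i < n) F i.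
Proof.
elim: n => [|n IH] /=; first by rewrite big_ord0.
by rewrite big_ord_recr /= IH.
Qed.

Lemma pow_expr (x : R) n : Rpow_def.pow x n = x ^+ n.
Proof.
elim: n => [|n IH] //=. by rewrite exprS IH.
Qed.

Lemma poly_inf_roots (p : {poly R}) : (forall t, p.[t] = 0) -> p = 0.
Proof.
move=> H; apply/eqP; apply/negPn/negP => p0.
have := @max_poly_roots _ p [seq (i%:R : R) | i <- iota 0 (size p)] p0.
rewrite size_map size_iota ltnn. move=> HH; suff : false by []; apply: HH.
- by apply/allP => x _; apply/rootP.
- rewrite map_inj_uniq ?iota_uniq //. move=> i j /eqP; rewrite eqr_nat => /eqP //.
Qed.

Lemma unit_poly_const (D Q : {poly R}) c : c != 0 ->
  (forall t, c = D.[t] * Q.[t]) -> forall t, D.[t] = D.[0].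
Proof.
move=> c0 H.
have E : D * Q = c%:P.
  apply/eqP; rewrite -subr_eq0; apply/eqP; apply: poly_inf_roots => t.
  by rewrite hornerD hornerN hornerM hornerC -H subrr.
have D0 : D != 0 by apply/negP => /eqP D0; move: E; rewrite D0 mul0r => /eqP; rewrite eq_sym polyC_eq0 (negPf c0).
have Q0 : Q != 0 by apply/negP => /eqP Q0; move: E; rewrite Q0 mulr0 => /eqP; rewrite eq_sym polyC_eq0 (negPf c0).
have := congr1 (fun p : {poly R} => size p) E =>/=; rewrite size_mul // size_polyC c0 => S.
have SD : size D = 1%N.
  have : (0 < size D)%N by rewrite size_poly_gt0.
  have : (0 < size Q)%N by rewrite size_poly_gt0.
  move: S; case: (size D) => [|[|m]] //=; case: (size Q) => [|[|l]] //=; by rewrite ?addnS.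
move=> t; by rewrite (size1_polyC (eq_leq SD)) !hornerC.
Qed.

Definition Lp n (cf : nat -> nat -> nat -> R) (a1 a2 a3 v1 v2 v3 : R) : {poly R} :=
  \sum_(i < n) \sum_(j < n) \sum_(k < n)
     ((cf i j k)%:P * (a1%:P + v1%:P * 'X) ^+ i * (a2%:P + v2%:P * 'X) ^+ j
       * (a3%:P + v3%:P * 'X) ^+ k).

Lemma Lp_horner n cf a1 a2 a3 v1 v2 v3 t :
  (Lp n cf a1 a2 a3 v1 v2 v3).[t] =
  sumR n (fun i => sumR n (fun j => sumR n (fun k =>
     Rmult (Rmult (Rmult (cf i j k) (Rpow_def.pow (Rplus a1 (Rmult v1 t)) i))
       (Rpow_def.pow (Rplus a2 (Rmult v2 t)) j)) (Rpow_def.pow (Rplus a3 (Rmult v3 t)) k)))).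
Proof.
rewrite /Lp sumR_big horner_sum; apply: eq_bigr => i _.
rewrite sumR_big horner_sum; apply: eq_bigr => j _.
rewrite sumR_big horner_sum; apply: eq_bigr => k _.
by rewrite !hornerE !pow_expr.
Qed.

Lemma unit_poly_const1 (D Q : {poly R}) :
  (forall t, R1 = Rmult D.[t] Q.[t]) -> D.[R1] = D.[R0].
Proof. move=> H; apply: (@unit_poly_const D Q R1) => //; exact: oner_neq0. Qed.

End Alg.


Lemma not_nonconst (d q : R -> R -> R -> R) : poly3 d -> poly3 q ->
  (forall x y z, 1 = d x y z * q x y z) -> ~ nonconstant3 d.
Proof.
intros [dd [n [cf [_ Hd]]]] [dq [m [cq [_ Hq]]]] H [x [y [z [x' [y' [z' Hne]]]]]].
apply Hne.
assert (E : forall (cc : nat -> nat -> nat -> R) nn t,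
  poly.horner (Alg.Lp nn cc x y z (x'-x) (y'-y) (z'-z)) t =
  sumR nn (fun i => sumR nn (fun j => sumR nn (fun k =>
    cc i j k * (x + (x'-x)*t) ^ i * (y + (y'-y)*t) ^ j * (z + (z'-z)*t) ^ k)))).
{ intros; apply Alg.Lp_horner. }
assert (K := Alg.unit_poly_const1 (Alg.Lp n cf x y z (x'-x) (y'-y) (z'-z))
                                  (Alg.Lp m cq x y z (x'-x) (y'-y) (z'-z))).
rewrite !E in K.
rewrite <- !Hd in K.
replace (x + (x'-x)*R1) with x' in K by ring.
replace (y + (y'-y)*R1) with y' in K by ring.
replace (z + (z'-z)*R1) with z' in K by ring.
replace (x + (x'-x)*R0) with x in K by ring.
replace (y + (y'-y)*R0) with y in K by ring.
replace (z + (z'-z)*R0) with z in K by ring.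
symmetry; apply K.
intros t. rewrite !E, <- Hd, <- Hq. apply H.
Qed.


Open Scope R_scope.

Lemma cont_mult {U : UniformSpace} (f g : U -> R) x :
  continuous f x -> continuous g x -> continuous (fun y => f y * g y) x.
Proof. intros; apply (continuous_mult f g); auto. Qed.
Lemma cont_plus {U : UniformSpace} (f g : U -> R) x :
  continuous f x -> continuous g x -> continuous (fun y => f y + g y) x.
Proof. intros; apply (continuous_plus f g); auto. Qed.
Lemma cont_minus {U : UniformSpace} (f g : U -> R) x :
  continuous f x -> continuous g x -> continuous (fun y => f y - g y) x.
Proof. intros; apply (continuous_minus f g); auto. Qed.
Lemma cont_opp {U : UniformSpace} (f : U -> R) x :
  continuous f x -> continuous (fun y => - f y) x.
Proof. intros; apply (continuous_opp f); auto. Qed.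
Lemma cont_const {U : UniformSpace} (c : R) (x : U) : continuous (fun _ => c) x.
Proof. apply continuous_const. Qed.
Lemma cont_exp {U : UniformSpace} (f : U -> R) x :
  continuous f x -> continuous (fun y => exp (f y)) x.
Proof.
intros; apply (@continuous_comp U R_UniformSpace R_UniformSpace f exp); auto.
assert (Hd: ex_derive exp (f x)) by (auto_derive; auto). exact (ex_derive_continuous _ _ Hd).
Qed.
Lemma cont_inv {U : UniformSpace} (f : U -> R) x :
  continuous f x -> f x <> 0 -> continuous (fun y => / f y) x.
Proof.
intros; apply (@continuous_comp U R_UniformSpace R_UniformSpace f Rinv); auto.
apply continuous_Rinv; auto.
Qed.
Lemma cont_div {U : UniformSpace} (f g : U -> R) x :
  continuous f x -> continuous g x -> g x <> 0 -> continuous (fun y => f y / g y) x.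
Proof. intros; unfold Rdiv; apply cont_mult; auto; apply cont_inv; auto. Qed.
Lemma cont_pow {U : UniformSpace} (f : U -> R) x n :
  continuous f x -> continuous (fun y => f y ^ n) x.
Proof. intros; induction n; simpl. apply cont_const. apply cont_mult; auto. Qed.
Lemma cont_x (a b c : R) : continuous (fun q : pt3 => fst (fst q)) (a, b, c).
Proof. apply (continuous_comp fst fst ((a,b),c)). apply continuous_fst. apply continuous_fst. Qed.
Lemma cont_y (a b c : R) : continuous (fun q : pt3 => snd (fst q)) (a, b, c).
Proof. apply (continuous_comp fst snd ((a,b),c)). apply continuous_fst. apply continuous_snd. Qed.
Lemma cont_z (a b c : R) : continuous (fun q : pt3 => snd q) (a, b, c).
Proof. apply continuous_snd. Qed.

Ltac cont := repeat first
  [ apply cont_x | apply cont_y | apply cont_z | apply cont_const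
  | apply cont_mult | apply cont_plus | apply cont_minus | apply cont_opp
  | apply cont_exp | apply cont_pow ].

Ltac req := match goal with |- ?a = ?b => change (@eq R a b) end.
Lemma H1_dx (x y z : R) : is_derive (fun t => H1 t y z) x (y * exp (- x - y) * (1 - x)).
Proof. unfold H1; auto_derive; auto; req; unfold Rminus; ring. Qed.
Lemma H1_dy (x y z : R) : is_derive (fun t => H1 x t z) y (x * exp (- x - y) * (1 - y)).
Proof. unfold H1; auto_derive; auto; req; unfold Rminus; ring. Qed.
Lemma H1_dz (x y z : R) : is_derive (fun t => H1 x y t) z 0.
Proof. unfold H1; auto_derive; auto; req; unfold Rminus; ring. Qed.

Lemma pdx_H1 x y z : pdx H1 x y z = y * exp (- x - y) * (1 - x).
Proof. apply is_derive_unique, H1_dx. Qed.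
Lemma pdy_H1 x y z : pdy H1 x y z = x * exp (- x - y) * (1 - y).
Proof. apply is_derive_unique, H1_dy. Qed.
Lemma pdz_H1 x y z : pdz H1 x y z = 0.
Proof. apply is_derive_unique, H1_dz. Qed.

Lemma H1_fi (U : pt3 -> Prop) b : open U ->
  (exists p q : pt3, U p /\ U q /\
     H1 (fst (fst p)) (snd (fst p)) (snd p) <> H1 (fst (fst q)) (snd (fst q)) (snd q)) ->
  first_integral_on U Px Qy (Sz b) H1.
Proof.
intros HU Hpq; split; [exact HU | split; [| split; [exact Hpq |]]].
- intros x y z _; repeat split.
  + eexists; apply H1_dx.
  + eexists; apply H1_dy.
  + eexists; apply H1_dz.
  + eapply continuous_ext. intros q; symmetry; apply pdx_H1. cont.
  + eapply continuous_ext. intros q; symmetry; apply pdy_H1. cont.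
  + eapply continuous_ext. intros q; symmetry; apply pdz_H1. cont.
- intros x y z _; unfold lie, Px, Qy, Sz; rewrite pdx_H1, pdy_H1, pdz_H1; ring.
Qed.

Lemma H1_diff : H1 1 (-1) 0 <> H1 1 (-2) 0.
Proof.
unfold H1. replace (- (1) - -1) with 0 by ring. replace (- (1) - -2) with 1 by ring.
rewrite exp_0. intro H. assert (exp 1 > 0) by apply exp_pos.
assert (exp 1 > 1). { assert (T := exp_ineq1_le 1). lra. }
nra.
Qed.

Lemma Zdx (x y z : R) : is_derive (fun t : R => (fun x y z => z) t y z) x 0.
Proof. auto_derive; auto. Qed.
Lemma Zdy (x y z : R) : is_derive (fun t : R => (fun x y z => z) x t z) y 0.
Proof. auto_derive; auto. Qed.
Lemma Zdz (x y z : R) : is_derive (fun t : R => (fun x y z => z) x y t) z 1.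
Proof. auto_derive; auto. Qed.
Lemma pdx_Z x y z : pdx (fun x y z => z) x y z = 0.
Proof. apply is_derive_unique; apply (Zdx x y z). Qed.
Lemma pdy_Z x y z : pdy (fun x y z => z) x y z = 0.
Proof. apply is_derive_unique; apply (Zdy x y z). Qed.
Lemma pdz_Z x y z : pdz (fun x y z => z) x y z = 1.
Proof. apply is_derive_unique; apply (Zdz x y z). Qed.

Lemma Z_fi0 : first_integral_on (fun _ => True) Px Qy (Sz 0) (fun x y z => z).
Proof.
split; [apply open_true | split; [| split]].
- intros x y z _; refine (conj _ (conj _ (conj _ (conj _ (conj _ _))))).
  + exists 0; apply (Zdx x y z).
  + exists 0; apply (Zdy x y z).
  + exists 1; apply (Zdz x y z).
  + eapply continuous_ext. intros q; symmetry; apply pdx_Z. cont.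
  + eapply continuous_ext. intros q; symmetry; apply pdy_Z. cont.
  + eapply continuous_ext. intros q; symmetry; apply pdz_Z. cont.
- exists (0,0,0), (0,0,1); simpl; repeat split; lra.
- intros x y z _; unfold lie, Px, Qy, Sz. rewrite pdx_Z, pdy_Z, pdz_Z. ring.
Qed.

Definition cx (i j k : nat) : R := match i, j, k with S O, O, O => 1 | _, _, _ => 0 end.
Definition cy (i j k : nat) : R := match i, j, k with O, S O, O => 1 | _, _, _ => 0 end.
Definition cz (i j k : nat) : R := match i, j, k with O, O, S O => 1 | _, _, _ => 0 end.
Definition c1 (i j k : nat) : R := match i, j, k with O, O, O => 1 | _, _, _ => 0 end.

Lemma poly_lin (a0 a1 a2 a3 : R) :
  poly3_deg_le 1 (fun x y z => a0 + a1 * x + a2 * y + a3 * z).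
Proof.
exists 2%nat, (fun i j k => a0 * c1 i j k + a1 * cx i j k + a2 * cy i j k + a3 * cz i j k).
split.
- intros i j k H. destruct i as [|[|i]], j as [|[|j]], k as [|[|k]]; simpl in *;
  try lia; ring.
- intros x y z; simpl; ring.
Qed.

Lemma deg_poly d f : poly3_deg_le d f -> poly3 f.
Proof. intros H; exists d; exact H. Qed.

Lemma poly_ext d f g : poly3_deg_le d f -> (forall x y z, g x y z = f x y z) -> poly3_deg_le d g.
Proof.
intros [n [c [H1 H2]]] E; exists n, c; split; auto. intros; rewrite E; auto.
Qed.

Lemma darboux_x : darboux_poly 2 Px Qy (Sz 0) (fun x y z => x).
Proof.
split; [| split].
- eapply deg_poly, poly_ext; [apply (poly_lin 0 1 0 0)|]; intros; simpl; ring.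
- exists 0, 0, 0, 1, 0, 0; lra.
- exists (fun x y z => 1 - y); split.
  + eapply poly_ext; [apply (poly_lin 1 0 (-1) 0)|]; intros; simpl; ring.
  + intros x y z; unfold lie, pdx, pdy, pdz, Px, Qy, Sz.
    rewrite Derive_id, !Derive_const. ring.
Qed.

Lemma darboux_y : darboux_poly 2 Px Qy (Sz 0) (fun x y z => y).
Proof.
split; [| split].
- eapply deg_poly, poly_ext; [apply (poly_lin 0 0 1 0)|]; intros; simpl; ring.
- exists 0, 0, 0, 0, 1, 0; lra.
- exists (fun x y z => -1 + x); split.
  + eapply poly_ext; [apply (poly_lin (-1) 1 0 0)|]; intros; simpl; ring.
  + intros x y z; unfold lie, pdx, pdy, pdz, Px, Qy, Sz.
    rewrite Derive_id, !Derive_const. ring.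
Qed.

Lemma darboux_z : darboux_poly 2 Px Qy (Sz 0) (fun x y z => z).
Proof.
split; [| split].
- eapply deg_poly, poly_ext; [apply (poly_lin 0 0 0 1)|]; intros; simpl; ring.
- exists 0, 0, 0, 0, 0, 1; lra.
- exists (fun x y z => 0); split.
  + eapply poly_ext; [apply (poly_lin 0 0 0 0)|]; intros; simpl; ring.
  + intros x y z; unfold lie, pdx, pdy, pdz, Px, Qy, Sz.
    rewrite Derive_id, !Derive_const. ring.
Qed.

Lemma expf : exp_factor 2 Px Qy (Sz 0) (fun x y z => - x - y) (fun x y z => 1).
Proof.
split; [| split; [| split]].
- eapply deg_poly, poly_ext; [apply (poly_lin 0 (-1) (-1) 0)|]; intros; simpl; ring.
- eapply deg_poly, poly_ext; [apply (poly_lin 1 0 0 0)|]; intros; simpl; ring.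
- intros d Pd _ [q [Pq Hq]]. apply (not_nonconst d q Pd Pq Hq).
- exists (fun x y z => y - x); split.
  + eapply poly_ext; [apply (poly_lin 0 (-1) 1 0)|]; intros; simpl; ring.
  + intros x y z _.
    assert (E1 : is_derive (fun t => exp ((- t - y) / 1)) x (- exp ((- x - y) / 1))).
    { auto_derive; auto. req. replace ((- x + - y) * / 1) with ((- x - y) / 1) by (unfold Rminus, Rdiv; ring). field. }
    assert (E2 : is_derive (fun t => exp ((- x - t) / 1)) y (- exp ((- x - y) / 1))).
    { auto_derive; auto. req. replace ((- x + - y) * / 1) with ((- x - y) / 1) by (unfold Rminus, Rdiv; ring). field. }
    assert (F1 : pdx (fun x y z => exp ((- x - y) / 1)) x y z = - exp ((- x - y) / 1))
      by (apply is_derive_unique; exact E1).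
    assert (F2 : pdy (fun x y z => exp ((- x - y) / 1)) x y z = - exp ((- x - y) / 1))
      by (apply is_derive_unique; exact E2).
    assert (E3 : is_derive (fun t : R => exp ((- x - y) / 1)) z 0) by (auto_derive; auto).
    assert (F3 : pdz (fun x y z => exp ((- x - y) / 1)) x y z = 0)
      by (apply is_derive_unique; exact E3).
    unfold lie; rewrite F1, F2, F3; unfold Px, Qy, Sz; ring.
Qed.

Lemma darboux_H1 : darboux_type_on 2 (fun _ => True) Px Qy (Sz 0) H1.
Proof.
exists 2%nat, 1%nat, (fun i => match i with O => (fun x y z => x) | _ => (fun x y z => y) end),
  (fun _ => 1%nat), (fun _ => fun x y z => - x - y), (fun _ => fun x y z => 1), (fun _ => 1).
split; [| split].
- intros [|[|i]] H; [apply darboux_x | apply darboux_y | lia].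
- intros j _; apply expf.
- intros x y z _; split; [intros; lra|].
  unfold H1; simpl. replace (1 * ((- x - y) / 1)) with (- x - y) by field. ring.
Qed.

Lemma darboux_Z : darboux_type_on 2 (fun _ => True) Px Qy (Sz 0) (fun x y z => z).
Proof.
exists 1%nat, 0%nat, (fun _ => fun x y z => z), (fun _ => 1%nat), (fun _ => fun x y z => 0),
  (fun _ => fun x y z => 1), (fun _ => 1).
split; [| split].
- intros; apply darboux_z.
- intros; lia.
- intros x y z _; split; [intros; lia|]. simpl; ring.
Qed.

Definition fwe (w : R) : R := w * exp w.

Lemma fwe_derive w : derivable_pt_lim fwe w (exp w * (1 + w)).
Proof.
apply is_derive_Reals. unfold fwe. auto_derive; auto.
match goal with |- ?a = ?b => change (@eq R a b) end. ring.
Qed.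

Lemma fwe_cont : continuity fwe.
Proof.
intros w. apply derivable_continuous_pt. exists (exp w * (1 + w)). apply fwe_derive.
Qed.

Lemma fwe_incr x y : 0 <= x -> x < y -> fwe x < fwe y.
Proof.
intros Hx Hxy; unfold fwe.
assert (exp x < exp y) by (apply exp_increasing; lra).
assert (0 < exp x) by apply exp_pos.
nra.
Qed.

Lemma LW_spec u : 0 < u -> 0 < LambertW u /\ fwe (LambertW u) = u.
Proof.
intros Hu.
assert (Ex : exists w, -1 <= w /\ w * exp w = u).
{ destruct (IVT (fun w => fwe w - u) 0 (u + 1)) as [z [Hz1 Hz2]].
  - intros w. apply continuity_pt_minus. apply fwe_cont. apply continuity_pt_const. intros a b; auto.
  - lra.
  - unfold fwe; rewrite Rmult_0_l; lra.
  - unfold fwe. assert (T := exp_ineq1_le (u + 1)). nra.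
  - exists z; split; [lra|]. unfold fwe in Hz2; lra. }
assert (S := epsilon_spec (inhabits 0) (fun w => -1 <= w /\ w * exp w = u) Ex).
fold (LambertW u) in S. destruct S as [S1 S2].
split; [| exact S2].
destruct (Rle_or_lt (LambertW u) 0) as [H|H]; auto.
exfalso. assert (0 < exp (LambertW u)) by apply exp_pos. nra.
Qed.

Lemma LW_unique u v : 0 < v -> fwe v = u -> LambertW u = v.
Proof.
intros Hv Hu.
assert (Hu0 : 0 < u) by (rewrite <- Hu; unfold fwe; assert (0 < exp v) by apply exp_pos; nra).
destruct (LW_spec u Hu0) as [W1 W2].
destruct (Rtotal_order (LambertW u) v) as [H|[H|H]]; auto.
- assert (T := fwe_incr _ _ (Rlt_le _ _ W1) H). lra.
- assert (T := fwe_incr _ _ (Rlt_le _ _ Hv) H). lra.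
Qed.

Lemma LW_incr u1 u2 : 0 < u1 -> u1 <= u2 -> LambertW u1 <= LambertW u2.
Proof.
intros H1 H12.
destruct (LW_spec u1 H1) as [A1 A2]. destruct (LW_spec u2 ltac:(lra)) as [B1 B2].
destruct (Rle_or_lt (LambertW u1) (LambertW u2)) as [H|H]; auto.
assert (T := fwe_incr _ _ (Rlt_le _ _ B1) H). lra.
Qed.

Lemma LW_cont u : 0 < u -> continuity_pt LambertW u.
Proof.
intros Hu. destruct (LW_spec u Hu) as [W1 W2].
set (lb := LambertW u / 2). set (ub := LambertW u + 1).
assert (Hlb : 0 < lb) by (unfold lb; lra).
apply (continuity_pt_recip_interv fwe LambertW lb ub).
- unfold lb, ub; lra.
- intros x y Hx Hxy _. apply fwe_incr; lra.
- intros x Hx _. unfold comp, id.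
  assert (0 < x). { assert (T := fwe_incr 0 lb ltac:(lra) Hlb). unfold fwe at 1 in T. rewrite Rmult_0_l in T. lra. }
  apply (LW_spec x H).
- intros x Hx1 Hx2.
  assert (0 < x). { assert (T := fwe_incr 0 lb ltac:(lra) Hlb). unfold fwe at 1 in T. rewrite Rmult_0_l in T. lra. }
  rewrite <- (LW_unique (fwe lb) lb Hlb eq_refl).
  rewrite <- (LW_unique (fwe ub) ub ltac:(unfold ub; lra) eq_refl).
  split; apply LW_incr; auto. assert (T := fwe_incr 0 lb ltac:(lra) Hlb). unfold fwe at 1 in T. rewrite Rmult_0_l in T. lra.
- intros a _. apply fwe_cont.
- rewrite <- W2. split; apply fwe_incr; unfold lb, ub; lra.
Qed.

Lemma LW_derive u : 0 < u ->
  is_derive LambertW u (LambertW u / (u * (1 + LambertW u))).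
Proof.
intros Hu. destruct (LW_spec u Hu) as [W1 W2].
apply is_derive_Reals.
assert (Prf : forall a, LambertW (u/2) <= a <= LambertW (2*u) -> derivable_pt fwe a).
{ intros a _. exists (exp a * (1 + a)). apply fwe_derive. }
assert (Pincr : LambertW (u/2) <= LambertW u <= LambertW (2*u)).
{ split; apply LW_incr; lra. }
assert (K := derivable_pt_lim_recip_interv fwe LambertW (u/2) (2*u) u Prf (LW_cont u Hu)
   ltac:(lra) ltac:(lra) Pincr).
rewrite (derive_pt_eq_0 _ _ _ _ (fwe_derive (LambertW u))) in K.
assert (0 < exp (LambertW u)) by apply exp_pos.
replace (LambertW u / (u * (1 + LambertW u))) with (1 / (exp (LambertW u) * (1 + LambertW u))).
- apply K.
  + intros x Hx. unfold comp, id. apply LW_spec. lra.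
  + apply Rgt_not_eq. apply Rmult_lt_0_compat; lra.
- unfold fwe in W2. set (w := LambertW u) in *. rewrite <- W2. field. split; lra.
Qed.

Definition Wa (x y s : R) : R := - (x * y * exp (s - x - y) / s).
Definition phi (b x y s : R) : R := b / (s * (LambertW (Wa x y s) + 1)).
Definition phx (b x y s : R) : R :=
  - b * LambertW (Wa x y s) * (1 - x) / (s * x * (1 + LambertW (Wa x y s)) ^ 3).
Definition phy (b x y s : R) : R :=
  - b * LambertW (Wa x y s) * (1 - y) / (s * y * (1 + LambertW (Wa x y s)) ^ 3).

Lemma Wa_pos x y s : 0 < x -> y < 0 -> 0 < s -> 0 < Wa x y s.
Proof.
intros Hx Hy Hs; unfold Wa.
assert (0 < exp (s - x - y)) by apply exp_pos.
assert (0 < - y * x * exp (s - x - y)) by (apply Rmult_lt_0_compat; [nra|lra]).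
assert (0 < - y * x * exp (s - x - y) / s) by (apply Rdiv_lt_0_compat; lra).
replace (- (x * y * exp (s - x - y) / s)) with (- y * x * exp (s - x - y) / s) by (field; lra).
lra.
Qed.

Lemma phi_dx b x y s : 0 < x -> y < 0 -> 0 < s ->
  is_derive (fun t => phi b t y s) x (phx b x y s).
Proof.
intros Hx Hy Hs.
assert (Ha := Wa_pos x y s Hx Hy Hs).
destruct (LW_spec _ Ha) as [W1 W2].
assert (HD := LW_derive _ Ha).
unfold phi, phx. unfold Wa in *.
auto_derive;
  (replace (- (x * y * exp (s + - x + - y) * / s)) with (- (x * y * exp (s - x - y) / s)) by (unfold Rminus, Rdiv; ring)).
- split; [| split; auto].
  + exists (LambertW (- (x * y * exp (s - x - y) / s)) / (- (x * y * exp (s - x - y) / s) * (1 + LambertW (- (x * y * exp (s - x - y) / s))))). exact HD.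
  + apply Rgt_not_eq. apply Rmult_lt_0_compat; lra.
- assert (HD2 : Derive (fun x0 : R => LambertW x0) (- (x * y * exp (s - x - y) / s)) =
     LambertW (- (x * y * exp (s - x - y) / s)) / (- (x * y * exp (s - x - y) / s) * (1 + LambertW (- (x * y * exp (s - x - y) / s)))))
    by (apply is_derive_unique; exact HD).
  rewrite HD2.
  req.
  assert (0 < exp (s - x - y)) by apply exp_pos.
  replace (s + - x + - y) with (s - x - y) by ring.
  field. repeat split; try lra.
Qed.

Lemma phi_dy b x y s : 0 < x -> y < 0 -> 0 < s ->
  is_derive (fun t => phi b x t s) y (phy b x y s).
Proof.
intros Hx Hy Hs.
assert (Ha := Wa_pos x y s Hx Hy Hs).
destruct (LW_spec _ Ha) as [W1 W2].
assert (HD := LW_derive _ Ha).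
unfold phi, phy. unfold Wa in *.
auto_derive;
  (replace (- (x * y * exp (s - x + - y) * / s)) with (- (x * y * exp (s - x - y) / s)) by (unfold Rminus, Rdiv; ring)).
- split; [| split; auto].
  + exists (LambertW (- (x * y * exp (s - x - y) / s)) / (- (x * y * exp (s - x - y) / s) * (1 + LambertW (- (x * y * exp (s - x - y) / s))))). exact HD.
  + apply Rgt_not_eq. apply Rmult_lt_0_compat; lra.
- assert (HD2 : Derive (fun x0 : R => LambertW x0) (- (x * y * exp (s - x - y) / s)) =
     LambertW (- (x * y * exp (s - x - y) / s)) / (- (x * y * exp (s - x - y) / s) * (1 + LambertW (- (x * y * exp (s - x - y) / s)))))
    by (apply is_derive_unique; exact HD).
  rewrite HD2.
  req.
  assert (0 < exp (s - x - y)) by apply exp_pos.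
  replace (s - x + - y) with (s - x - y) by ring.
  field. repeat split; try lra.
Qed.

Lemma cont_LW {V : UniformSpace} (f : V -> R) p :
  continuous f p -> 0 < f p -> continuous (fun q => LambertW (f q)) p.
Proof.
intros Hf Hp.
apply (@continuous_comp V R_UniformSpace R_UniformSpace f LambertW); auto.
assert (Hd : ex_derive LambertW (f p)) by (eexists; apply LW_derive; auto).
exact (ex_derive_continuous _ _ Hd).
Qed.

Definition goodF (F : R -> R -> R -> R) : Prop :=
  forall (V : UniformSpace) (fx fy fs : V -> R) (p : V),
  continuous fx p -> continuous fy p -> continuous fs p ->
  0 < fx p -> fy p < 0 -> 0 < fs p ->
  continuous (fun q => F (fx q) (fy q) (fs q)) p.

Lemma cont_W {V : UniformSpace} (fx fy fs : V -> R) (p : V) :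
  continuous fx p -> continuous fy p -> continuous fs p ->
  0 < fx p -> fy p < 0 -> 0 < fs p ->
  continuous (fun q => LambertW (Wa (fx q) (fy q) (fs q))) p.
Proof.
intros Cx Cy Cs Hx Hy Hs.
apply cont_LW; [| apply Wa_pos; auto].
unfold Wa. apply cont_opp. apply cont_div; [| auto | lra].
apply cont_mult; [apply cont_mult; auto|]. apply cont_exp. apply cont_minus; [apply cont_minus|]; auto.
Qed.

Lemma good_phi b : goodF (phi b).
Proof.
intros V fx fy fs p Cx Cy Cs Hx Hy Hs.
assert (W1 := proj1 (LW_spec _ (Wa_pos _ _ _ Hx Hy Hs))).
unfold phi. apply cont_div; [apply cont_const | |].
- apply cont_mult; auto. apply cont_plus; [apply cont_W; auto | apply cont_const].
- apply Rgt_not_eq; apply Rmult_lt_0_compat; lra.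
Qed.

Lemma good_phx b : goodF (phx b).
Proof.
intros V fx fy fs p Cx Cy Cs Hx Hy Hs.
assert (W1 := proj1 (LW_spec _ (Wa_pos _ _ _ Hx Hy Hs))).
unfold phx. apply cont_div.
- apply cont_mult; [apply cont_mult; [apply cont_const | apply cont_W; auto] | apply cont_minus; auto; apply cont_const].
- apply cont_mult; [apply cont_mult; auto|]. apply cont_pow. apply cont_plus; [apply cont_const | apply cont_W; auto].
- assert (0 < (1 + LambertW (Wa (fx p) (fy p) (fs p))) ^ 3) by (apply pow_lt; lra).
  apply Rgt_not_eq. apply Rmult_lt_0_compat; auto. apply Rmult_lt_0_compat; auto.
Qed.

Lemma good_phy b : goodF (phy b).
Proof.
intros V fx fy fs p Cx Cy Cs Hx Hy Hs.
assert (W1 := proj1 (LW_spec _ (Wa_pos _ _ _ Hx Hy Hs))).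
unfold phy. apply cont_div.
- apply cont_mult; [apply cont_mult; [apply cont_const | apply cont_W; auto] | apply cont_minus; auto; apply cont_const].
- apply cont_mult; [apply cont_mult; auto|]. apply cont_pow. apply cont_plus; [apply cont_const | apply cont_W; auto].
- assert (0 < (1 + LambertW (Wa (fx p) (fy p) (fs p))) ^ 3) by (apply pow_lt; lra).
  set (P := (1 + LambertW (Wa (fx p) (fy p) (fs p))) ^ 3) in *.
  assert (0 < fs p * (- fy p) * P) by (apply Rmult_lt_0_compat; [apply Rmult_lt_0_compat|]; lra).
  assert (fs p * fy p * P = - (fs p * - fy p * P)) by ring. lra.
Qed.

Lemma ballR (x e y : R) : ball x e y -> Rabs (y - x) < e.
Proof. intros H; exact H. Qed.
Lemma Rball (x e y : R) : Rabs (y - x) < e -> ball x e y.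
Proof. intros H; exact H. Qed.

Lemma loc_gt (x : R) : 0 < x -> locally x (fun t => 0 < t).
Proof.
intros Hx. exists (mkposreal (x/2) ltac:(lra)). intros t Ht. apply ballR in Ht. simpl in Ht.
apply Rabs_def2 in Ht. lra.
Qed.
Lemma loc_lt (x : R) : x < 0 -> locally x (fun t => t < 0).
Proof.
intros Hx. exists (mkposreal (-x/2) ltac:(lra)). intros t Ht. apply ballR in Ht. simpl in Ht.
apply Rabs_def2 in Ht. lra.
Qed.

Lemma loc2 (P Q : R -> Prop) (x s : R) : locally x P -> locally s Q ->
  locally (x, s) (fun z : R * R => P (fst z) /\ Q (snd z)).
Proof.
intros [e1 H1] [e2 H2].
exists (mkposreal (Rmin e1 e2) (Rmin_pos _ _ (cond_pos e1) (cond_pos e2))).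
intros [u v] [Hu Hv]; simpl. split.
- apply H1. eapply ball_le; [| exact Hu]. apply Rmin_l.
- apply H2. eapply ball_le; [| exact Hv]. apply Rmin_r.
Qed.

Lemma cont_fst2 (x s : R) : continuous (fun z : R * R => fst z) (x, s).
Proof. apply continuous_fst. Qed.
Lemma cont_snd2 (x s : R) : continuous (fun z : R * R => snd z) (x, s).
Proof. apply continuous_snd. Qed.

Lemma c2d_dx b x y s : 0 < x -> y < 0 -> 0 < s ->
  continuity_2d_pt (fun u v => Derive (fun z => phi b z y v) u) x s.
Proof.
intros Hx Hy Hs. apply continuity_2d_pt_filterlim.
change (continuous (fun z : R * R => Derive (fun z0 => phi b z0 y (snd z)) (fst z)) (x, s)).
apply (continuous_ext_loc _ (fun z : R * R => phx b (fst z) y (snd z))).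
- generalize (loc2 _ _ x s (loc_gt x Hx) (loc_gt s Hs)).
  apply filter_imp. intros [u v] [Hu Hv]; simpl.
  symmetry; apply is_derive_unique, phi_dx; auto.
- apply (good_phx b _ (fun z : R * R => fst z) (fun _ => y) (fun z : R * R => snd z));
    simpl; auto using cont_fst2, cont_snd2, cont_const.
Qed.

Lemma c2d_dy b x y s : 0 < x -> y < 0 -> 0 < s ->
  continuity_2d_pt (fun u v => Derive (fun z => phi b x z v) u) y s.
Proof.
intros Hx Hy Hs. apply continuity_2d_pt_filterlim.
change (continuous (fun z : R * R => Derive (fun z0 => phi b x z0 (snd z)) (fst z)) (y, s)).
apply (continuous_ext_loc _ (fun z : R * R => phy b x (fst z) (snd z))).
- generalize (loc2 _ _ y s (loc_lt y Hy) (loc_gt s Hs)).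
  apply filter_imp. intros [u v] [Hu Hv]; simpl.
  symmetry; apply is_derive_unique, phi_dy; auto.
- apply (good_phy b _ (fun _ => x) (fun z : R * R => fst z) (fun z : R * R => snd z));
    simpl; auto using cont_fst2, cont_snd2, cont_const.
Qed.

Lemma cont1 (F : R -> R -> R -> R) x y s : goodF F -> 0 < x -> y < 0 -> 0 < s ->
  continuous (F x y) s.
Proof.
intros G Hx Hy Hs.
apply (G R_UniformSpace (fun _ => x) (fun _ => y) (fun t => t) s); auto using cont_const, continuous_id.
Qed.

Lemma exRInt_good (F : R -> R -> R -> R) x y a c : goodF F -> 0 < x -> y < 0 -> 0 < a -> 0 < c ->
  ex_RInt (F x y) a c.
Proof.
intros G Hx Hy Ha Hc. apply (@ex_RInt_continuous R_CompleteNormedModule). intros z Hz.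
apply cont1; auto. assert (0 < Rmin a c) by (apply Rmin_pos; auto). lra.
Qed.

Definition Gf b x y := RInt (phi b x y) 1 x.

Lemma Rmin_pos' a c : 0 < a -> 0 < c -> 0 < Rmin a c.
Proof. intros; apply Rmin_pos; auto. Qed.

Lemma cpt (F : R -> R -> R -> R) x y s : goodF F -> 0 < x -> y < 0 -> 0 < s ->
  continuity_pt (F x y) s.
Proof. intros; apply continuity_pt_filterlim, cont1; auto. Qed.

Lemma G_dx b x y : 0 < x -> y < 0 ->
  is_derive (fun t => Gf b t y) x (RInt (phx b x y) 1 x + phi b x y x).
Proof.
intros Hx Hy.
assert (Hm : 0 < Rmin 1 x) by (apply Rmin_pos'; lra).
assert (K := is_derive_RInt_param_bound_comp (fun t s => phi b t y s) (fun _ => 1) (fun t => t) x 0 1).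
simpl in K.
assert (E : RInt (fun t0 => Derive (fun u => phi b u y t0) x) 1 x = RInt (phx b x y) 1 x).
{ apply RInt_ext. intros s Hs. apply is_derive_unique. apply phi_dx; auto. lra. }
rewrite E in K.
replace (RInt (phx b x y) 1 x + phi b x y x) with
  (RInt (phx b x y) 1 x + - phi b x y 1 * 0 + phi b x y x * 1) by ring.
apply K; clear K E.
- apply (filter_imp (fun t => 0 < t)); [| apply loc_gt; auto].
  intros t Ht. apply exRInt_good; auto using good_phi; lra.
- exists (mkposreal (1/2) ltac:(lra)). simpl.
  apply (filter_imp (fun t => 0 < t)); [| apply loc_gt; auto].
  intros t Ht. apply exRInt_good; auto using good_phi; lra.
- exists (mkposreal (x/2) ltac:(lra)). simpl.
  apply (filter_imp (fun t => 0 < t)); [| apply loc_gt; auto].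
  intros t Ht. apply exRInt_good; auto using good_phi; lra.
- auto_derive; auto.
- auto_derive; auto.
- exists (mkposreal (Rmin 1 x / 2) ltac:(lra)). simpl.
  apply (filter_imp (fun t => 0 < t)); [| apply loc_gt; auto].
  intros t Ht s Hs. exists (phx b t y s). apply phi_dx; auto.
  assert (Rmin (1 - Rmin 1 x / 2) (x - Rmin 1 x / 2) >= Rmin 1 x / 2).
  { unfold Rmin at 1; destruct Rle_dec; unfold Rmin in *; destruct Rle_dec; lra. }
  lra.
- intros s Hs. apply c2d_dx; auto. lra.
- exists (mkposreal (Rmin 1 x / 2) ltac:(lra)). simpl. intros u v Hu Hv.
  apply Rabs_def2 in Hu. apply Rabs_def2 in Hv.
  apply c2d_dx; auto; unfold Rmin in *; destruct Rle_dec; lra.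
- exists (mkposreal (x / 2) ltac:(lra)). simpl. intros u v Hu Hv.
  apply Rabs_def2 in Hu. apply Rabs_def2 in Hv.
  apply c2d_dx; auto; lra.
- apply cpt; auto using good_phi; lra.
- apply cpt; auto using good_phi; lra.
Qed.

Lemma G_dy b x y : 0 < x -> y < 0 ->
  is_derive (fun t => Gf b x t) y (RInt (phy b x y) 1 x).
Proof.
intros Hx Hy.
assert (Hm : 0 < Rmin 1 x) by (apply Rmin_pos'; lra).
assert (K := is_derive_RInt_param (fun t s => phi b x t s) 1 x y).
simpl in K.
assert (E : RInt (fun t0 => Derive (fun u => phi b x u t0) y) 1 x = RInt (phy b x y) 1 x).
{ apply RInt_ext. intros s Hs. apply is_derive_unique. apply phi_dy; auto. lra. }
rewrite E in K.
apply K; clear K E.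
- apply (filter_imp (fun t => t < 0)); [| apply loc_lt; auto].
  intros t Ht s Hs. exists (phy b x t s). apply phi_dy; auto. lra.
- intros s Hs. apply c2d_dy; auto. lra.
- apply (filter_imp (fun t => t < 0)); [| apply loc_lt; auto].
  intros t Ht. apply exRInt_good; auto using good_phi; lra.
Qed.

Lemma RInt_param_cont {U : UniformSpace} (Th : U -> R -> R) (p : U) :
  (forall t, 0 <= t <= 1 -> continuous (fun w : U * R => Th (fst w) (snd w)) (p, t)) ->
  locally p (fun q => ex_RInt (Th q) 0 1) ->
  continuous (fun q => RInt (Th q) 0 1) p.
Proof.
intros HC Hex.
apply filterlim_locally. intros eps.
assert (He : 0 < eps / 4) by (destruct eps; simpl; lra).
set (e := mkposreal _ He).
assert (Hd : forall t, exists d : posreal, 0 <= t <= 1 -> forall w : U * R, ball (p, t) d w ->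
           Rabs (Th (fst w) (snd w) - Th p t) < e).
{ intros t. destruct (classic (0 <= t <= 1)) as [Ht|Ht].
  - destruct (proj1 (filterlim_locally _ _) (HC t Ht) e) as [d Hd].
    exists d. intros _ w Hw. apply ballR. apply (Hd w Hw).
  - exists (mkposreal 1 Rlt_0_1). intros H; tauto. }
set (delta := fun t => proj1_sig (constructive_indefinite_description _ (Hd t))).
assert (Hdelta : forall t, 0 <= t <= 1 -> forall w : U * R, ball (p, t) (delta t) w ->
           Rabs (Th (fst w) (snd w) - Th p t) < e).
{ intros t. exact (proj2_sig (constructive_indefinite_description _ (Hd t))). }
destruct (compactness_value_1d 0 1 delta) as [d Hcd].
assert (Hexp : ex_RInt (Th p) 0 1) by (apply (locally_singleton _ _ Hex)).
apply (filter_imp (fun q => ball p d q /\ ex_RInt (Th q) 0 1)).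
2: { apply filter_and; [apply locally_ball | exact Hex]. }
intros q [Hq Hexq]. apply Rball.
assert (Hpt : forall tau, 0 <= tau <= 1 -> Rabs (Th q tau - Th p tau) <= 2 * e).
{ intros tau Htau.
  destruct (Rle_or_lt (Rabs (Th q tau - Th p tau)) (2 * e)) as [H|H]; auto.
  exfalso. apply (Hcd tau Htau). intros [t [Ht [Htt Hdt]]].
  assert (A1 : Rabs (Th q tau - Th p t) < e).
  { apply (Hdelta t Ht (q, tau)). split; simpl.
    - eapply ball_le; [exact Hdt | exact Hq].
    - apply Rball. exact Htt. }
  assert (A2 : Rabs (Th p tau - Th p t) < e).
  { apply (Hdelta t Ht (p, tau)). split; simpl.
    - apply ball_center.
    - apply Rball. exact Htt. }
  apply Rabs_def2 in A1. apply Rabs_def2 in A2.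
  assert (Rabs (Th q tau - Th p tau) < 2 * e) by (apply Rabs_def1; lra). lra. }
assert (Hm : RInt (Th q) 0 1 - RInt (Th p) 0 1 = RInt (fun tau => Th q tau - Th p tau) 0 1).
{ symmetry. apply (@RInt_minus R_CompleteNormedModule); auto. }
rewrite Hm.
eapply Rle_lt_trans.
- apply abs_RInt_le_const; [lra | | exact Hpt].
  apply (@ex_RInt_minus R_NormedModule); auto.
- simpl. destruct eps; simpl in *. lra.
Qed.

Lemma cfst {A B : UniformSpace} (z : A * B) : continuous (fun w => fst w) z.
Proof. destruct z; apply continuous_fst. Qed.
Lemma csnd {A B : UniformSpace} (z : A * B) : continuous (fun w => snd w) z.
Proof. destruct z; apply continuous_snd. Qed.

Lemma loc3 (P Q : R -> Prop) (x y z : R) : locally x P -> locally y Q ->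
  locally ((x, y, z) : pt3) (fun q : pt3 => P (fst (fst q)) /\ Q (snd (fst q))).
Proof.
intros [e1 H1] [e2 H2].
exists (mkposreal (Rmin e1 e2) (Rmin_pos _ _ (cond_pos e1) (cond_pos e2))).
intros [[u v] w] [[Hu Hv] Hw]; simpl. split.
- apply H1. eapply ball_le; [| exact Hu]. apply Rmin_l.
- apply H2. eapply ball_le; [| exact Hv]. apply Rmin_r.
Qed.

Lemma cont_Int (F : R -> R -> R -> R) (x y z : R) : goodF F -> 0 < x -> y < 0 ->
  continuous (fun q : pt3 => RInt (F (fst (fst q)) (snd (fst q))) 1 (fst (fst q))) (x, y, z).
Proof.
intros G Hx Hy.
set (Th := fun (q : pt3) (tau : R) =>
  (fst (fst q) - 1) * F (fst (fst q)) (snd (fst q)) ((fst (fst q) - 1) * tau + 1)).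
apply (continuous_ext_loc _ (fun q => RInt (Th q) 0 1)).
- apply (filter_imp (fun q : pt3 => 0 < fst (fst q) /\ snd (fst q) < 0)).
  2: { apply (loc3 (fun t => 0 < t) (fun t => t < 0)); [apply loc_gt | apply loc_lt]; auto. }
  intros q [Hqx Hqy]. unfold Th.
  assert (K := @RInt_comp_lin R_CompleteNormedModule (F (fst (fst q)) (snd (fst q)))
                 (fst (fst q) - 1) 1 0 1).
  replace ((fst (fst q) - 1) * 0 + 1) with 1 in K by ring.
  replace ((fst (fst q) - 1) * 1 + 1) with (fst (fst q)) in K by ring.
  apply K. apply exRInt_good; auto. lra.
- apply RInt_param_cont.
  + intros t Ht. unfold Th.
    assert (Cx : continuous (fun w : pt3 * R => fst (fst (fst w))) ((x, y, z), t)).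
    { apply (continuous_comp (fun w : pt3 * R => fst w) (fun q : pt3 => fst (fst q))); [apply cfst|].
      apply (continuous_comp (fun q : pt3 => fst q) (fun q : R * R => fst q)); [apply cfst | apply cfst]. }
    assert (Cy : continuous (fun w : pt3 * R => snd (fst (fst w))) ((x, y, z), t)).
    { apply (continuous_comp (fun w : pt3 * R => fst w) (fun q : pt3 => snd (fst q))); [apply cfst|].
      apply (continuous_comp (fun q : pt3 => fst q) (fun q : R * R => snd q)); [apply cfst | apply csnd]. }
    assert (Ct : continuous (fun w : pt3 * R => snd w) ((x, y, z), t)) by apply csnd.
    apply cont_mult.
    * apply cont_minus; [exact Cx | apply cont_const].
    * apply (G _ (fun w : pt3 * R => fst (fst (fst w))) (fun w : pt3 * R => snd (fst (fst w)))
               (fun w : pt3 * R => (fst (fst (fst w)) - 1) * snd w + 1)); auto; simpl; try lra.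
      -- apply (cont_plus (fun w : pt3 * R => (fst (fst (fst w)) - 1) * snd w) (fun _ => 1)); [apply (cont_mult (fun w : pt3 * R => fst (fst (fst w)) - 1) (fun w : pt3 * R => snd w)); [apply (cont_minus (fun w : pt3 * R => fst (fst (fst w))) (fun _ => 1)); [exact Cx | apply cont_const] | exact Ct] | apply cont_const].
      -- nra.
  + apply (filter_imp (fun q : pt3 => 0 < fst (fst q) /\ snd (fst q) < 0)).
    2: { apply (loc3 (fun t => 0 < t) (fun t => t < 0)); [apply loc_gt | apply loc_lt]; auto. }
    intros q [Hqx Hqy]. unfold Th.
    apply (@ex_RInt_continuous R_CompleteNormedModule). intros t Ht.
    assert (0 <= t <= 1) by (unfold Rmin, Rmax in Ht; destruct Rle_dec; lra).
    apply cont_mult; [apply cont_const|].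
    apply (G R_UniformSpace (fun _ => fst (fst q)) (fun _ => snd (fst q)) (fun t => (fst (fst q) - 1) * t + 1));
      auto using cont_const.
    * apply (cont_plus (fun t : R => (fst (fst q) - 1) * t) (fun _ => 1)); [apply (cont_mult (fun _ : R => fst (fst q) - 1) (fun t : R => t)); [apply cont_const | apply continuous_id] | apply cont_const].
    * nra.
Qed.

Definition H2 b := fun x y z : R => z * hfun b 1 x y.

Lemma hfun_G b x y : hfun b 1 x y = exp (Gf b x y).
Proof. reflexivity. Qed.

Lemma H2_dx b x y z : 0 < x -> y < 0 ->
  is_derive (fun t => H2 b t y z) x (z * ((RInt (phx b x y) 1 x + phi b x y x) * exp (Gf b x y))).
Proof.
intros Hx Hy.
assert (E1 : is_derive exp (Gf b x y) (exp (Gf b x y))) by (auto_derive; auto; req; ring).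
assert (K := is_derive_comp exp (fun t => Gf b t y) x _ _ E1 (G_dx b x y Hx Hy)).
apply (is_derive_scal _ _ z) in K. exact K.
Qed.

Lemma H2_dy b x y z : 0 < x -> y < 0 ->
  is_derive (fun t => H2 b x t z) y (z * (RInt (phy b x y) 1 x * exp (Gf b x y))).
Proof.
intros Hx Hy.
assert (E1 : is_derive exp (Gf b x y) (exp (Gf b x y))) by (auto_derive; auto; req; ring).
assert (K := is_derive_comp exp (fun t => Gf b x t) y _ _ E1 (G_dy b x y Hx Hy)).
apply (is_derive_scal _ _ z) in K. exact K.
Qed.

Lemma H2_dz b (x y z : R) : is_derive (fun t => H2 b x y t) z (hfun b 1 x y).
Proof.
unfold H2. set (c := hfun b 1 x y).
assert (K := is_derive_scal (fun t => t) z c 1 (ltac:(auto_derive; auto))).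
rewrite Rmult_1_r in K.
eapply is_derive_ext; [| exact K]. intros t; simpl. ring.
Qed.

Definition Ud (q : pt3) : Prop := 0 < fst (fst q) /\ snd (fst q) < 0.

Lemma Ud_open : open Ud.
Proof.
apply open_and.
- apply (open_comp (fun q : pt3 => fst (fst q)) (fun u => 0 < u)).
  + intros [[a c] d] _. apply cont_x.
  + apply open_gt.
- apply (open_comp (fun q : pt3 => snd (fst q)) (fun u => u < 0)).
  + intros [[a c] d] _. apply cont_y.
  + apply open_lt.
Qed.

Lemma loc_Ud x y z : 0 < x -> y < 0 -> locally ((x, y, z) : pt3) Ud.
Proof.
intros Hx Hy. apply (loc3 (fun t => 0 < t) (fun t => t < 0)); [apply loc_gt | apply loc_lt]; auto.
Qed.

Lemma cont_Gq b x y z : 0 < x -> y < 0 ->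
  continuous (fun q : pt3 => Gf b (fst (fst q)) (snd (fst q))) (x, y, z).
Proof. intros; apply (cont_Int (phi b)); auto using good_phi. Qed.

Lemma cont_phiq b x y z : 0 < x -> y < 0 ->
  continuous (fun q : pt3 => phi b (fst (fst q)) (snd (fst q)) (fst (fst q))) (x, y, z).
Proof.
intros Hx Hy. apply (good_phi b _ (fun q : pt3 => fst (fst q)) (fun q : pt3 => snd (fst q)) (fun q : pt3 => fst (fst q)));
  simpl; auto using cont_x, cont_y.
Qed.

Lemma Lie_int b x y : 0 < x -> y < 0 ->
  x * (1 - y) * RInt (phx b x y) 1 x + y * (-1 + x) * RInt (phy b x y) 1 x = 0.
Proof.
intros Hx Hy.
assert (Ex1 : ex_RInt (phx b x y) 1 x) by (apply exRInt_good; auto using good_phx; lra).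
assert (Ex2 : ex_RInt (phy b x y) 1 x) by (apply exRInt_good; auto using good_phy; lra).
assert (E : RInt (fun s => plus (scal (x * (1 - y)) (phx b x y s)) (scal (y * (-1 + x)) (phy b x y s))) 1 x =
            x * (1 - y) * RInt (phx b x y) 1 x + y * (-1 + x) * RInt (phy b x y) 1 x).
{ rewrite (@RInt_plus R_CompleteNormedModule).
  - rewrite !(@RInt_scal R_CompleteNormedModule); auto.
  - apply (@ex_RInt_scal R_NormedModule); auto.
  - apply (@ex_RInt_scal R_NormedModule); auto. }
rewrite <- E.
rewrite (RInt_ext _ (fun _ => 0)).
- rewrite RInt_const. apply Rmult_0_r.
- intros s Hs.
  assert (Hs0 : 0 < s) by (assert (0 < Rmin 1 x) by (apply Rmin_pos; lra); lra).
  assert (W1 := proj1 (LW_spec _ (Wa_pos _ _ _ Hx Hy Hs0))).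
  unfold phx, phy, plus, scal; simpl; unfold mult; simpl.
  field. repeat split; try lra.
Qed.

Lemma phi_diag b x y : 0 < x -> y < 0 -> x * (1 - y) * phi b x y x = b.
Proof.
intros Hx Hy.
assert (E : LambertW (Wa x y x) = - y).
{ apply LW_unique; [lra|]. unfold fwe, Wa.
  replace (x - x - y) with (- y) by ring. field. lra. }
unfold phi. rewrite E. field. lra.
Qed.

Lemma H2_fi b : 0 < b -> first_integral_on Ud Px Qy (Sz b) (H2 b).
Proof.
intros Hb.
assert (Px_ : forall x y z, 0 < x -> y < 0 -> pdx (H2 b) x y z =
   z * ((RInt (phx b x y) 1 x + phi b x y x) * exp (Gf b x y)))
  by (intros; apply is_derive_unique, H2_dx; auto).
assert (Py_ : forall x y z, 0 < x -> y < 0 -> pdy (H2 b) x y z =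
   z * (RInt (phy b x y) 1 x * exp (Gf b x y)))
  by (intros; apply is_derive_unique, H2_dy; auto).
assert (Pz_ : forall x y z, pdz (H2 b) x y z = exp (Gf b x y))
  by (intros; apply is_derive_unique, H2_dz; auto).
split; [exact Ud_open | split; [| split]].
- intros x y z [Hx Hy]; simpl in Hx, Hy.
  refine (conj _ (conj _ (conj _ (conj _ (conj _ _))))).
  + eexists; apply H2_dx; auto.
  + eexists; apply H2_dy; auto.
  + eexists; apply H2_dz.
  + apply (continuous_ext_loc _ (fun q : pt3 => snd q * ((RInt (phx b (fst (fst q)) (snd (fst q))) 1 (fst (fst q))
        + phi b (fst (fst q)) (snd (fst q)) (fst (fst q))) * exp (Gf b (fst (fst q)) (snd (fst q)))))).
    * apply (filter_imp Ud); [| apply loc_Ud; auto]. intros [[u v] w] [Hu Hv]; simpl in *. symmetry; apply Px_; auto.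
    * apply cont_mult; [apply cont_z|]. apply cont_mult.
      -- apply cont_plus; [apply (cont_Int (phx b)); auto using good_phx | apply cont_phiq; auto].
      -- apply cont_exp, cont_Gq; auto.
  + apply (continuous_ext_loc _ (fun q : pt3 => snd q * (RInt (phy b (fst (fst q)) (snd (fst q))) 1 (fst (fst q))
        * exp (Gf b (fst (fst q)) (snd (fst q)))))).
    * apply (filter_imp Ud); [| apply loc_Ud; auto]. intros [[u v] w] [Hu Hv]; simpl in *. symmetry; apply Py_; auto.
    * apply cont_mult; [apply cont_z|]. apply cont_mult.
      -- apply (cont_Int (phy b)); auto using good_phy.
      -- apply cont_exp, cont_Gq; auto.
  + apply (continuous_ext (fun q : pt3 => exp (Gf b (fst (fst q)) (snd (fst q))))).
    * intros q; symmetry; apply Pz_.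
    * apply cont_exp, cont_Gq; auto.
- exists (1, -1, 0), (1, -1, 1). unfold Ud, H2; simpl. repeat split; try lra.
  rewrite Rmult_0_l, Rmult_1_l. apply Rlt_not_eq, exp_pos.
- intros x y z [Hx Hy]; simpl in Hx, Hy. unfold lie.
  rewrite Px_, Py_, Pz_; auto. unfold Px, Qy, Sz.
  assert (L := Lie_int b x y Hx Hy). assert (D := phi_diag b x y Hx Hy).
  transitivity (z * exp (Gf b x y) * (x * (1 - y) * RInt (phx b x y) 1 x + y * (-1 + x) * RInt (phy b x y) 1 x
     + x * (1 - y) * phi b x y x - b)); [ring|].
  rewrite L, D. ring.
Qed.

Theorem theorem1p3 (b : R) (hb : 0 <= b) :
  (b = 0 ->
     first_integral_on (fun _ => True) Px Qy (Sz b) H1 /\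
     first_integral_on (fun _ => True) Px Qy (Sz b) (fun x y z => z) /\
     darboux_type_on 2 (fun _ => True) Px Qy (Sz b) H1 /\
     darboux_type_on 2 (fun _ => True) Px Qy (Sz b) (fun x y z => z)) /\
  (0 < b ->
     exists (U : pt3 -> Prop) (x0 : R),
       first_integral_on U Px Qy (Sz b) H1 /\
       first_integral_on U Px Qy (Sz b) (fun x y z => z * hfun b x0 x y)).
Proof.
split.
- intros ->. split; [| split; [| split]].
  + apply H1_fi; [apply open_true|]. exists (1,-1,0), (1,-2,0); simpl; split; [exact I | split; [exact I|]].
    apply H1_diff.
  + apply Z_fi0.
  + apply darboux_H1.
  + apply darboux_Z.
- intros Hb. exists Ud, 1. split.
  + apply H1_fi; [apply Ud_open|]. exists (1,-1,0), (1,-2,0); unfold Ud; simpl.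
    split; [lra | split; [lra |]]. apply H1_diff.
  + exact (H2_fi b Hb).
Qed.
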